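(* Let $G$ be a finite group, $\alpha\colon G^3\to\mathrm{U}(1)$ a normalized 3-cocycle, $\mathcal{G}=\mathcal{G}(G,\mathrm{U}(1),\alpha)$, and $\Sigma$ a connected closed oriented surface of genus $\geq1$. Fix a homomorphism $\tilde\rho\colon\pi_1\Sigma\to G$ and let $(\tilde\rho,\tilde\gamma)$ and $(\tilde\rho,\tilde\gamma')$ be two weak representations $\pi_1\Sigma\to\mathcal{G}$ lifting $\tilde\rho$. Then the corresponding flat $\mathcal{G}$-bundles are isomorphic over the identity of the underlying $G$-bundle (i.e. there is a 1-isomorphism between the weak representations whose underlying element of $G$ is $1$) if and only if $\langle\Psi_\Sigma,\tilde\gamma\rangle=\langle\Psi_\Sigma,\tilde\gamma'\rangle$ in $\mathrm{U}(1)$, where $\Psi_\Sigma$ is a cycle representing the fundamental class in $H_2(\pi_1\Sigma;\mathbb{Z})$.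
   Context: $\mathcal{G}(G,\mathrm{U}(1),\alpha)$ is the monoidal groupoid with objects $G$, automorphisms of each object $\mathrm{U}(1)$ (no other morphisms), $g\otimes h=gh$, associator given by $\alpha$. A weak representation (monoidal functor) $\pi_1\Sigma\to\mathcal{G}$ lifting $\tilde\rho$ is a normalized 2-cochain $\tilde\gamma\colon(\pi_1\Sigma)^2\to\mathrm{U}(1)$ with $d\tilde\gamma=\tilde\rho^*\alpha$, where $(d\tilde\gamma)(a,b,c)=\tilde\gamma(b,c)\tilde\gamma(ab,c)^{-1}\tilde\gamma(a,bc)\tilde\gamma(a,b)^{-1}$ and $\tilde\rho^*\alpha(a,b,c)=\alpha(\tilde\rho a,\tilde\rho b,\tilde\rho c)$. A 1-isomorphism $(\tilde\rho,\tilde\gamma)\to(\tilde\rho',\tilde\gamma')$ is a monoidal natural isomorphism, given by $\tilde h\in G$ with $\tilde h\tilde\rho\tilde h^{-1}=\tilde\rho'$ and $\tilde\eta\colon\pi_1\Sigma\to\mathrm{U}(1)$ satisfying the monoidality condition. The pairing $\langle\Psi_\Sigma,\tilde\gamma\rangle$ is the group-(co)homology pairing, well defined since $d\tilde\gamma$ pulls back from $G$ and is the same for both lifts; for genus 1 with $\pi_1\Sigma=\mathbb{Z}^2=\langle e_1,e_2\rangle$ and $\Psi_\Sigma=e_1\otimes e_2-e_2\otimes e_1$ it equals $\tilde\gamma(e_1,e_2)/\tilde\gamma(e_2,e_1)$. *)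

(* Defs.v *)
(* finite group G as a finGroupType, U(1) as the unit circle
   in the complex numbers R[i] over a realType R, and the surface group
   pi_1(Sigma_g) as an abstract group given by its standard presentation. *)
From mathcomp Require Import all_boot all_order all_algebra all_fingroup.
From mathcomp Require Import reals complex.
Set Implicit Arguments.
Unset Strict Implicit.
Unset Printing Implicit Defensive.
Import GRing.Theory Num.Theory.
Local Open Scope ring_scope.

Definition is_group (T : Type) (mul : T -> T -> T) (inv : T -> T) (one : T) : Prop :=
  [/\ forall x y z, mul x (mul y z) = mul (mul x y) z,
      forall x, mul one x = x,
      forall x, mul x one = x,
      forall x, mul (inv x) x = one
    & forall x, mul x (inv x) = one].

Definition is_hom (T S : Type) (mulT : T -> T -> T) (mulS : S -> S -> S)
  (f : T -> S) : Prop :=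
  forall x y, f (mulT x y) = mulS (f x) (f y).

Definition eval_word (T : Type) (mul : T -> T -> T) (inv : T -> T) (one : T)
  (w : seq (T * bool)) : T :=
  foldr (fun l acc => mul (if l.2 then inv l.1 else l.1) acc) one w.

Definition surface_relator (T : Type) (g : nat) (a b : 'I_g -> T) : seq (T * bool) :=
  flatten [seq [:: (a i, false); (b i, false); (a i, true); (b i, true)]
          | i <- enum 'I_g].

(** (Gam, mul, inv, one) is a group with generators a_i, b_i (i < g) presented
    by the single relation prod_i [a_i, b_i] = 1, i.e. it is (isomorphic to)
    the fundamental group of the closed oriented surface of genus g, with
    a_i, b_i a standard system of generators. *)
Definition surface_group_presentation (Gam : Type) (mul : Gam -> Gam -> Gam)
  (inv : Gam -> Gam) (one : Gam) (g : nat) (a b : 'I_g -> Gam) : Prop :=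
  [/\ is_group mul inv one,
      eval_word mul inv one (surface_relator a b) = one
    & forall (H : Type) (mulH : H -> H -> H) (invH : H -> H) (oneH : H),
        is_group mulH invH oneH ->
        forall x y : 'I_g -> H,
          eval_word mulH invH oneH (surface_relator x y) = oneH ->
          (exists f : Gam -> H, is_hom mul mulH f /\
              forall i, f (a i) = x i /\ f (b i) = y i) /\
          (forall f1 f2 : Gam -> H,
              is_hom mul mulH f1 -> (forall i, f1 (a i) = x i /\ f1 (b i) = y i) ->
              is_hom mul mulH f2 -> (forall i, f2 (a i) = x i /\ f2 (b i) = y i) ->
              forall z, f1 z = f2 z)].

Definition U1_valued (R : realType) (T : Type) (f : T -> R[i]) : Prop :=
  forall x, `|f x| = 1.

Definition normalized_3cocycle (R : realType) (gT : finGroupType)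
  (alpha : gT -> gT -> gT -> R[i]) : Prop :=
  [/\ forall a b c, `|alpha a b c| = 1,
      forall b c, alpha 1%g b c = 1,
      forall a c, alpha a 1%g c = 1,
      forall a b, alpha a b 1%g = 1
    & forall a b c d,
        alpha b c d / alpha (a * b)%g c d * alpha a (b * c)%g d
          / alpha a b (c * d)%g * alpha a b c = 1].

Definition cobound2 (R : realType) (Gam : Type) (mul : Gam -> Gam -> Gam)
  (gamma : Gam -> Gam -> R[i]) (a b c : Gam) : R[i] :=
  gamma b c / gamma (mul a b) c * gamma a (mul b c) / gamma a b.

(** A weak representation pi_1 Sigma -> G(G, U(1), alpha) lifting rho, i.e. a
    monoidal functor: a normalized U(1)-valued 2-cochain gamma with
    d gamma = rho^* alpha. *)
Definition weak_rep_lifting (R : realType) (gT : finGroupType) (Gam : Type)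
  (mul : Gam -> Gam -> Gam) (one : Gam)
  (alpha : gT -> gT -> gT -> R[i]) (rho : Gam -> gT)
  (gamma : Gam -> Gam -> R[i]) : Prop :=
  [/\ forall x y, `|gamma x y| = 1,
      forall x, gamma one x = 1,
      forall x, gamma x one = 1
    & forall x y z, cobound2 mul gamma x y z = alpha (rho x) (rho y) (rho z)].

(** A 1-isomorphism (monoidal natural isomorphism) (rho,gamma) -> (rho,gamma')
    whose underlying element h of G is 1: components eta : Gam -> U(1)
    (automorphisms of the objects rho x), and the monoidality condition
    eta(xy) o gamma(x,y) = gamma'(x,y) o (eta(x) (x) eta(y)). *)
Definition iso_over_identity (R : realType) (Gam : Type) (mul : Gam -> Gam -> Gam)
  (gamma gamma' : Gam -> Gam -> R[i]) : Prop :=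
  exists eta : Gam -> R[i],
    U1_valued eta /\
    forall x y, eta (mul x y) * gamma x y = gamma' x y * (eta x * eta y).

(** For the relator
    r = y_1 ... y_n (letters y_k = x or x^{-1}) with prefixes w_k = y_1...y_k,
      Psi_Sigma = sum_k [w_{k-1} | y_k]  -  sum_{k : y_k = x^{-1}} [x | x^{-1}],
    which is a 2-cycle representing the fundamental class of H_2(pi_1 Sigma; Z)
    (for g = 1 it is homologous to e1 (x) e2 - e2 (x) e1). *)
Fixpoint pair_aux (R : realType) (Gam : Type) (mul : Gam -> Gam -> Gam)
  (inv : Gam -> Gam) (gamma : Gam -> Gam -> R[i]) (w : Gam)
  (ls : seq (Gam * bool)) : R[i] :=
  match ls with
  | [::] => 1
  | (x, false) :: ls' => gamma w x * pair_aux mul inv gamma (mul w x) ls'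
  | (x, true) :: ls' =>
      gamma w (inv x) / gamma x (inv x) * pair_aux mul inv gamma (mul w (inv x)) ls'
  end.

Definition pairing_fundamental (R : realType) (Gam : Type) (mul : Gam -> Gam -> Gam)
  (inv : Gam -> Gam) (one : Gam) (g : nat) (a b : 'I_g -> Gam)
  (gamma : Gam -> Gam -> R[i]) : R[i] :=
  pair_aux mul inv gamma one (surface_relator a b).

(* Main.v *)
Require Import Defs.
From mathcomp Require Import all_boot all_order all_algebra all_fingroup.
From mathcomp Require Import reals complex.
From mathcomp Require Import ring.
Import GRing.Theory Num.Theory.
Local Open Scope ring_scope.
Set Implicit Arguments.
Unset Strict Implicit.

Lemma n1_neq0 (R : realType) (z : R[i]) : `|z| = 1 -> z != 0.
Proof. by move=> h; rewrite -normr_eq0 h oner_eq0. Qed.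

Lemma pa_norm (R : realType) (Gam : Type) (mul : Gam -> Gam -> Gam) (inv : Gam -> Gam)
  (ga : Gam -> Gam -> R[i]) : (forall x y, `|ga x y| = 1) ->
  forall ls w, `|pair_aux mul inv ga w ls| = 1.
Proof.
move=> h; elim=> [|[x [|]] ls IH] w /=; first by rewrite normr1.
  by rewrite !normrM normfV !h IH invr1 !mulr1.
by rewrite normrM h IH mulr1.
Qed.

Lemma pa_div (R : realType) (Gam : Type) (mul : Gam -> Gam -> Gam) (inv : Gam -> Gam)
  (ga ga' : Gam -> Gam -> R[i]) ls w :
  pair_aux mul inv (fun x y => ga' x y / ga x y) w ls =
  pair_aux mul inv ga' w ls / pair_aux mul inv ga w ls.
Proof.
elim: ls w => [|[x [|]] ls IH] w /=; first by rewrite invr1 mulr1.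
  by rewrite IH !invfM !invrK; ring.
by rewrite IH !invfM; ring.
Qed.

Definition UT (R : realType) := {u : R[i] | `|u| == 1}.

Lemma UT_eq (R : realType) (u v : UT R) : sval u = sval v -> u = v.
Proof. by case: u v => [u hu] [v hv] /= e; subst v; congr exist; apply: bool_irrelevance. Qed.

Lemma umul_pf (R : realType) (u v : UT R) : `|sval u * sval v| == 1.
Proof. by rewrite normrM (eqP (proj2_sig u)) (eqP (proj2_sig v)) mulr1. Qed.
Definition umul (R : realType) (u v : UT R) : UT R := exist (fun z : R[i] => `|z| == 1) _ (umul_pf u v).
Lemma uinv_pf (R : realType) (u : UT R) : `|(sval u)^-1| == 1.
Proof. by rewrite normfV (eqP (proj2_sig u)) invr1. Qed.
Definition uinv (R : realType) (u : UT R) : UT R := exist (fun z : R[i] => `|z| == 1) _ (uinv_pf u).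
Lemma one_pf (R : realType) : `|1 : R[i]| == 1.
Proof. by rewrite normr1. Qed.
Definition uone (R : realType) : UT R := exist (fun z : R[i] => `|z| == 1) _ (one_pf R).
Definition uof (R : realType) (z : R[i]) : UT R :=
  if (`|z| == 1) =P true is ReflectT p then exist (fun z : R[i] => `|z| == 1) z p else uone R.
Lemma uofE (R : realType) (z : R[i]) : `|z| = 1 -> sval (uof z) = z.
Proof. by rewrite /uof => h; case: eqP => //; rewrite h eqxx. Qed.


Definition mulH (R : realType) (Gam : Type) (mul : Gam -> Gam -> Gam)
  (d : Gam -> Gam -> R[i]) (p q : UT R * Gam) : UT R * Gam :=
  (umul (umul p.1 q.1) (uof (d p.2 q.2)), mul p.2 q.2).
Definition invH (R : realType) (Gam : Type) (inv : Gam -> Gam)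
  (d : Gam -> Gam -> R[i]) (p : UT R * Gam) : UT R * Gam :=
  (umul (uinv p.1) (uinv (uof (d (inv p.2) p.2))), inv p.2).
Definition oneH (R : realType) (Gam : Type) (one : Gam) : UT R * Gam := (uone R, one).

Definition cocyc (R : realType) (Gam : Type) (mul : Gam -> Gam -> Gam) (one : Gam)
  (d : Gam -> Gam -> R[i]) :=
 [/\ forall x y, `|d x y| = 1, forall x, d one x = 1, forall x, d x one = 1
   & forall x y z, d y z * d x (mul y z) = d (mul x y) z * d x y].

Lemma pair_eq (A B : Type) (p q : A * B) : p.1 = q.1 -> p.2 = q.2 -> p = q.
Proof. by case: p q => ? ? [? ?] /= -> ->. Qed.

Lemma d_sym (R : realType) (Gam : Type) (mul : Gam -> Gam -> Gam) (inv : Gam -> Gam)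
  (one : Gam) (d : Gam -> Gam -> R[i]) :
  is_group mul inv one -> cocyc mul one d -> forall x, d x (inv x) = d (inv x) x.
Proof.
case=> A L Ri Li Ri' [N D1 D2 C] x.
have := C x (inv x) x; rewrite Li Ri' D1 D2 mulr1 mul1r => <-. by [].
Qed.

Lemma ext_group (R : realType) (Gam : Type) (mul : Gam -> Gam -> Gam) (inv : Gam -> Gam)
  (one : Gam) (d : Gam -> Gam -> R[i]) :
  is_group mul inv one -> cocyc mul one d ->
  is_group (mulH mul d) (invH inv d) (oneH R one).
Proof.
move=> G Cd; have S := d_sym G Cd.
case: G => A L Ri Li Ri'; case: Cd => N D1 D2 C.
split.
- move=> [u x] [v y] [w z]; apply: pair_eq => /=; last by rewrite A.
  apply: UT_eq => /=; rewrite !uofE //.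
  have e := C x y z.
  transitivity (sval u * sval v * sval w * (d y z * d x (mul y z))); first ring.
  rewrite e; ring.
- move=> [u x]; apply: pair_eq => /=; last by rewrite L.
  by apply: UT_eq => /=; rewrite !uofE // D1 !mulr1 mul1r.
- move=> [u x]; apply: pair_eq => /=; last by rewrite Ri.
  by apply: UT_eq => /=; rewrite !uofE // D2 !mulr1.
- move=> [u x]; apply: pair_eq => /=; last by rewrite Li.
  apply: UT_eq => /=; rewrite !uofE //.
  have := n1_neq0 (N (inv x) x); have := n1_neq0 (eqP (proj2_sig u)).
  move=> h1 h2; field. by rewrite h1 h2.
- move=> [u x]; apply: pair_eq => /=; last by rewrite Ri'.
  apply: UT_eq => /=; rewrite !uofE // S.
  have := n1_neq0 (N (inv x) x); have := n1_neq0 (eqP (proj2_sig u)).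
  move=> h1 h2; field. by rewrite h1 h2.
Qed.
Definition liftH (R : realType) (Gam : Type) (l : Gam * bool) : (UT R * Gam) * bool :=
  ((uone R, l.1), l.2).

Lemma eval_cons (T : Type) (mul : T -> T -> T) (inv : T -> T) (one : T) l ls :
  eval_word mul inv one (l :: ls) = mul (if l.2 then inv l.1 else l.1) (eval_word mul inv one ls).
Proof. by []. Qed.

Lemma evalH (R : realType) (Gam : Type) (mul : Gam -> Gam -> Gam) (inv : Gam -> Gam)
  (one : Gam) (d : Gam -> Gam -> R[i]) :
  is_group mul inv one -> cocyc mul one d ->
  forall ls u w,
  sval (mulH mul d (u, w) (eval_word (mulH mul d) (invH inv d) (oneH R one) (map (@liftH R Gam) ls))).1
    = sval u * pair_aux mul inv d w ls /\
  (mulH mul d (u, w) (eval_word (mulH mul d) (invH inv d) (oneH R one) (map (@liftH R Gam) ls))).2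
    = mul w (eval_word mul inv one ls).
Proof.
move=> G Cd; have GH := ext_group G Cd; have S := d_sym G Cd.
case: GH => AH _ RH _ _; case: G => A L Ri Li Ri'; case: (Cd) => N D1 D2 C.
elim=> [|[x bo] ls IH] u w.
  by rewrite (_ : eval_word (mulH mul d) (invH inv d) (oneH R one) (map (@liftH R Gam) [::]) = oneH R one) // RH /= mulr1 Ri.
rewrite map_cons eval_cons AH.
case E: (mulH mul d (u, w) _) => [u' w'].
have [-> ->] := IH u' w'.
rewrite eval_cons; move: E; case: bo => /= -[<- <-] /=; split.
- by rewrite !uofE // S invr1 mul1r; ring.
- by rewrite A.
- by rewrite !uofE // mulr1 mulrA.
- by rewrite A.
Qed.

Lemma rel_lift (R : realType) (Gam : Type) (g : nat) (a b : 'I_g -> Gam) :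
  surface_relator (fun i => (uone R, a i)) (fun i => (uone R, b i)) =
  map (@liftH R Gam) (surface_relator a b).
Proof.
rewrite /surface_relator map_flatten -map_comp; congr flatten; apply: eq_map => i //.
Qed.

Definition Qf (R : realType) (Gam : Type) (eta : Gam -> R[i]) (ls : seq (Gam * bool)) :=
  foldr (fun l acc => (if l.2 then (eta l.1)^-1 else eta l.1) * acc) 1 ls.

Lemma Qf_rel (R : realType) (Gam : Type) (eta : Gam -> R[i]) (g : nat) (a b : 'I_g -> Gam) :
  (forall x, eta x != 0) -> Qf eta (surface_relator a b) = 1.
Proof.
move=> nz; rewrite /surface_relator; elim: (enum 'I_g) => [|i s IH] //=.
rewrite IH mulr1 mulrA mulrA -[eta (a i) * _ * _]mulrA [eta (b i) * _]mulrC mulrA.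
by rewrite mulfV // mul1r mulfV.
Qed.

Lemma telesc (R : realType) (Gam : Type) (mul : Gam -> Gam -> Gam) (inv : Gam -> Gam)
  (one : Gam) (d : Gam -> Gam -> R[i]) (eta : Gam -> R[i]) :
  is_group mul inv one -> (forall x, eta x != 0) -> eta one = 1 ->
  (forall x y, d x y = eta (mul x y) / (eta x * eta y)) ->
  forall ls w, pair_aux mul inv d w ls * eta w * Qf eta ls = eta (mul w (eval_word mul inv one ls)).
Proof.
case=> A L Ri Li Ri' nz e1 Hd.
elim=> [|[x [|]] ls IH] w /=.
- by rewrite Ri !mulr1 mul1r.
- rewrite A -IH !Hd Ri' e1; field.
  by rewrite !nz.
- rewrite A -IH !Hd; field.
  by rewrite !nz.
Qed.

Theorem mainTheorem3 (R : realType) (gT : finGroupType)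
  (alpha : gT -> gT -> gT -> R[i])
  (Gam : Type) (mul : Gam -> Gam -> Gam) (inv : Gam -> Gam) (one : Gam)
  (g : nat) (a b : 'I_g -> Gam)
  (rho : Gam -> gT) (gamma gamma' : Gam -> Gam -> R[i]) :
  normalized_3cocycle alpha ->
  (0 < g)%N ->
  surface_group_presentation mul inv one a b ->
  is_hom mul (fun x y => (x * y)%g) rho ->
  weak_rep_lifting mul one alpha rho gamma ->
  weak_rep_lifting mul one alpha rho gamma' ->
  (iso_over_identity mul gamma gamma' <->
   pairing_fundamental mul inv one a b gamma =
   pairing_fundamental mul inv one a b gamma').
Proof.
move=> _ _ [G Hrel Huniv] _ [N1 L1 R1 C1] [N2 L2 R2 C2].
have nz1 : forall x y, gamma x y != 0 by move=> x y; apply: n1_neq0.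
have nz2 : forall x y, gamma' x y != 0 by move=> x y; apply: n1_neq0.
pose d := fun x y => gamma' x y / gamma x y.
have Cd : cocyc mul one d.
  split.
  - by move=> x y; rewrite /d normrM normfV N1 N2 invr1 mulr1.
  - by move=> x; rewrite /d L1 L2 invr1 mulr1.
  - by move=> x; rewrite /d R1 R2 invr1 mulr1.
  move=> x y z; have e := C2 x y z; rewrite -C1 /cobound2 in e.
  have h : gamma' y z = (gamma y z / gamma (mul x y) z * gamma x (mul y z) / gamma x y)
     * gamma' (mul x y) z * gamma' x y / gamma' x (mul y z).
    by rewrite -e; field; rewrite !nz2.
  rewrite /d h; field; by rewrite !nz1 !nz2.
have PAd : pair_aux mul inv d one (surface_relator a b) =
   pairing_fundamental mul inv one a b gamma' / pairing_fundamental mul inv one a b gamma.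
  exact: pa_div.
have nzP : pairing_fundamental mul inv one a b gamma != 0.
  by apply: n1_neq0; apply: pa_norm.
case: (G) => A L Ri Li Ri'.
split.
- case=> eta [Ue He].
  have nze : forall x, eta x != 0 by move=> x; apply: n1_neq0.
  have Hd : forall x y, d x y = eta (mul x y) / (eta x * eta y).
    move=> x y; rewrite /d.
    transitivity (gamma' x y * (eta x * eta y) / (gamma x y * (eta x * eta y))).
      by field; rewrite !nze nz1.
    by rewrite -He; field; rewrite !nze nz1.
  have e1 : eta one = 1.
    have := He one one; rewrite L L1 L2 mulr1 mul1r => e.
    by apply: (mulfI (nze one)); rewrite mulr1.
  have := telesc G nze e1 Hd (surface_relator a b) one.
  rewrite Qf_rel // Hrel L e1 !mulr1 PAd => h.
  by rewrite -[RHS](divfK nzP) h mul1r.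
- move=> Hp.
  have P1 : pair_aux mul inv d one (surface_relator a b) = 1 by rewrite PAd Hp mulfV // -Hp.
  have GH := ext_group G Cd.
  have Hev : eval_word (mulH mul d) (invH inv d) (oneH R one)
      (surface_relator (fun i => (uone R, a i)) (fun i => (uone R, b i))) = oneH R one.
    rewrite rel_lift.
    have [e1 e2] := evalH G Cd (surface_relator a b) (uone R) one.
    case: GH => _ LH _ _ _; move: e1 e2; rewrite -/(oneH R one) LH => e1 e2.
    apply: pair_eq; last by rewrite e2 L Hrel.
    by apply: UT_eq; rewrite e1 P1 /= mulr1.
  have [[f [fh fgen]] _] := Huniv _ _ _ _ GH _ _ Hev.
  have [_ U] := Huniv _ _ _ _ (G) a b Hrel.
  have f2 : forall z, (f z).2 = z.
    move=> z; apply: (U (fun z => (f z).2) id) => //.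
    + by move=> x y /=; rewrite fh.
    + by move=> i; have [-> ->] := fgen i.
  exists (fun z => sval (f z).1); split.
    by move=> z; apply/eqP; apply: (proj2_sig (f z).1).
  move=> x y; rewrite fh /= !f2 uofE; last by case: Cd.
  rewrite /d; field; by rewrite nz1.
Qed.
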